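(* Let $\Omega$ be a monoid, $A$ an associative algebra, $M$ an $A$-bimodule, $H$ a Hochschild $2$-cocycle and $T=\{T_\alpha\}_{\alpha\in\Omega}$ an $H$-twisted $\mathcal{O}$-operator family. If $H^1_{\mathrm{TwOoperf}}(M,A)=0$, then $T$ is rigid, i.e. every formal one-parameter deformation of $T$ is equivalent to the undeformed deformation $\overline{T}^t = T$.
   Context: $\Omega$ is a semigroup with unit $1$, over a field $\mathbf{k}$ of characteristic $0$. Hochschild $2$-cocycle: bilinear $H:A^{\otimes 2}\to M$ with $a \cdot H (b, c) - H ( a \cdot b, c)+ H (a, b \cdot c) - H (a, b) \cdot c =0$. $H$-twisted $\mathcal{O}$-operator family: linear maps $T_\alpha: M\to A$ with $T_\alpha (u) \cdot T_\beta (v) = T_{\alpha \beta} ( T_\alpha (u) \cdot v + u \cdot T_\beta (v) + H (T_\alpha (u), T_\beta (v)))$. $H^1_{\mathrm{TwOoperf}}(M,A)=Z^1/B^1$ where $Z^1$ is the set of families $f=\{f_\alpha:M\to A\}_{\alpha\in\Omega}$ of linear maps with $T_{\alpha_1}(u_1)\cdot f_{\alpha_2}(u_2) - T_{\alpha_1\alpha_2}(u_1\cdot f_{\alpha_2}(u_2)) - T_{\alpha_1\alpha_2}(H(T_{\alpha_1}u_1, f_{\alpha_2}(u_2))) - f_{\alpha_1\alpha_2}\big(T_{\alpha_1}(u_1)\cdot u_2 + u_1\cdot T_{\alpha_2}(u_2) + H(T_{\alpha_1}u_1,T_{\alpha_2}u_2)\big) + f_{\alpha_1}(u_1)\cdot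 T_{\alpha_2}(u_2) - T_{\alpha_1\alpha_2}(f_{\alpha_1}(u_1)\cdot u_2) - T_{\alpha_1\alpha_2}(H(f_{\alpha_1}(u_1),T_{\alpha_2}u_2)) = 0$ for all $u_1,u_2,\alpha_1,\alpha_2$, and $B^1$ is the set of families $\{(\delta a)_\alpha\}$, $a\in A$, with $(\delta a)_\alpha(u)= T_\alpha (u) \cdot a - T_\alpha (u \cdot a) - T_\alpha (H (T_\alpha u, a)) - a \cdot T_\alpha (u) + T_\alpha (a \cdot u) + T_\alpha (H (a, T_\alpha u))$. A formal one-parameter deformation of $T$ is $T^t=\sum_{i\ge0}t^iT^{(i)}$, $T^{(i)}=\{T^{(i)}_\alpha:M\to A\}$, $T^{(0)}=T$, such that the $\mathbf{k}[[t]]$-linear maps $T^t_\alpha:M[[t]]\to A[[t]]$ satisfy $T^t_\alpha (u) \cdot T^t_\beta (v) = T^t_{\alpha \beta} ( T^t_\alpha (u) \cdot v + u \cdot T^t_\beta (v) + H (T^t_\alpha (u), T^t_\beta (v)))$. Two deformations $T^t,\overline{T}^t$ are equivalent if there are $\theta\in A$, linear maps $\phi_i:A\to A$, $\psi_i:M\to M$ ($i\ge2$) such that $\phi^t = \mathrm{id}_A + t (l^{\mathrm{ad}}_\theta - r^{\mathrm{ad}}_\theta) + \sum_{i\ge2} t^i \phi_i$ and $\psi^t_\alpha = \mathrm{id}_M + t (l_\theta - r_\theta + H (\theta, T_\alpha -) - H (T_\alpha -, \theta) ) + \sum_{i\ge2} t^i \psi_i$ satisfy $\phi^t \circ T^t_\alpha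 = \overline{T}^t_\alpha \circ \psi^t_\alpha$ for all $\alpha$, where $l^{\mathrm{ad}}_\theta(a)=\theta a$, $r^{\mathrm{ad}}_\theta(a)=a\theta$, $l_\theta(u)=\theta\cdot u$, $r_\theta(u)=u\cdot\theta$. *)

(* Defs.v *)
From HB Require Import structures.
From mathcomp Require Import all_boot all_order all_algebra.
Set Implicit Arguments. Unset Strict Implicit. Unset Printing Implicit Defensive.
Import GRing.Theory.
Local Open Scope ring_scope.

Definition klinear (k : fieldType) (U V : lmodType k) (f : U -> V) : Prop :=
  forall (c : k) (x y : U), f (c *: x + y) = c *: f x + f y.

Definition is_monoid (Om : Type) (op : Om -> Om -> Om) (e : Om) : Prop :=
  (forall a b c, op a (op b c) = op (op a b) c) /\
  (forall a, op e a = a) /\ (forall a, op a e = a).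

Definition assoc_alg (k : fieldType) (A : lmodType k) (mulA : A -> A -> A) : Prop :=
  (forall a b c, mulA a (mulA b c) = mulA (mulA a b) c) /\
  (forall a, klinear (mulA a)) /\ (forall b, klinear (fun a => mulA a b)).

Definition bimodule (k : fieldType) (A M : lmodType k) (mulA : A -> A -> A)
  (l : A -> M -> M) (r : M -> A -> M) : Prop :=
  (forall a, klinear (l a)) /\ (forall u, klinear (fun a => l a u)) /\
  (forall a, klinear (fun u => r u a)) /\ (forall u, klinear (r u)) /\
  (forall a b u, l (mulA a b) u = l a (l b u)) /\
  (forall a b u, r u (mulA a b) = r (r u a) b) /\
  (forall a b u, r (l a u) b = l a (r u b)).

Definition hoch_2cocycle (k : fieldType) (A M : lmodType k) (mulA : A -> A -> A)
  (l : A -> M -> M) (r : M -> A -> M) (H : A -> A -> M) : Prop :=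
  (forall a, klinear (H a)) /\ (forall b, klinear (fun a => H a b)) /\
  (forall a b c, l a (H b c) - H (mulA a b) c + H a (mulA b c) - r (H a b) c = 0).

Definition twisted_Oop_family (k : fieldType) (A M : lmodType k) (Om : Type)
  (op : Om -> Om -> Om) (mulA : A -> A -> A) (l : A -> M -> M) (r : M -> A -> M)
  (H : A -> A -> M) (T : Om -> M -> A) : Prop :=
  (forall al, klinear (T al)) /\
  (forall al be u v, mulA (T al u) (T be v) =
      T (op al be) (l (T al u) v + r u (T be v) + H (T al u) (T be v))).

Definition Z1 (k : fieldType) (A M : lmodType k) (Om : Type)
  (op : Om -> Om -> Om) (mulA : A -> A -> A) (l : A -> M -> M) (r : M -> A -> M)
  (H : A -> A -> M) (T : Om -> M -> A) (f : Om -> M -> A) : Prop :=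
  (forall al, klinear (f al)) /\
  (forall a1 a2 u1 u2,
     mulA (T a1 u1) (f a2 u2) - T (op a1 a2) (r u1 (f a2 u2))
     - T (op a1 a2) (H (T a1 u1) (f a2 u2))
     - f (op a1 a2) (l (T a1 u1) u2 + r u1 (T a2 u2) + H (T a1 u1) (T a2 u2))
     + mulA (f a1 u1) (T a2 u2) - T (op a1 a2) (l (f a1 u1) u2)
     - T (op a1 a2) (H (f a1 u1) (T a2 u2)) = 0).

Definition delta0 (k : fieldType) (A M : lmodType k) (Om : Type)
  (mulA : A -> A -> A) (l : A -> M -> M) (r : M -> A -> M)
  (H : A -> A -> M) (T : Om -> M -> A) (a : A) : Om -> M -> A :=
  fun al u =>
    mulA (T al u) a - T al (r u a) - T al (H (T al u) a)
    - mulA a (T al u) + T al (l a u) + T al (H a (T al u)).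

Definition B1 (k : fieldType) (A M : lmodType k) (Om : Type)
  (mulA : A -> A -> A) (l : A -> M -> M) (r : M -> A -> M)
  (H : A -> A -> M) (T : Om -> M -> A) (f : Om -> M -> A) : Prop :=
  exists a : A, forall al u, f al u = delta0 mulA l r H T a al u.

Definition H1_vanishes (k : fieldType) (A M : lmodType k) (Om : Type)
  (op : Om -> Om -> Om) (mulA : A -> A -> A) (l : A -> M -> M) (r : M -> A -> M)
  (H : A -> A -> M) (T : Om -> M -> A) : Prop :=
  forall f : Om -> M -> A, Z1 op mulA l r H T f -> B1 mulA l r H T f.

(* A formal one-parameter deformation, given by its coefficients
   Tt i al = T^{(i)}_al; the defining identity in A[[t]] is written
   coefficientwise (coefficient of t^n), with all maps extended
   k[[t]]-(bi)linearly. *)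
Definition formal_deformation (k : fieldType) (A M : lmodType k) (Om : Type)
  (op : Om -> Om -> Om) (mulA : A -> A -> A) (l : A -> M -> M) (r : M -> A -> M)
  (H : A -> A -> M) (T : Om -> M -> A) (Tt : nat -> Om -> M -> A) : Prop :=
  (forall al, Tt 0%N al = T al) /\
  (forall i al, klinear (Tt i al)) /\
  (forall (n : nat) al be u v,
     \sum_(i < n.+1) mulA (Tt i al u) (Tt (n - i)%N be v) =
     \sum_(i < n.+1) Tt i (op al be)
        (l (Tt (n - i)%N al u) v + r u (Tt (n - i)%N be v)
         + \sum_(j < (n - i).+1) H (Tt j al u) (Tt (n - i - j)%N be v))).

Definition const_deformation (A M : Type) (Om : Type) (zero : A)
  (T : Om -> M -> A) : nat -> Om -> M -> A :=
  fun i al u => if i is 0%N then T al u else zero.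

(* coefficients of phi^t = id + t (l^ad_theta - r^ad_theta) + sum_{i>=2} t^i phi_i *)
Definition phi_coef (k : fieldType) (A : lmodType k) (mulA : A -> A -> A)
  (theta : A) (phi : nat -> A -> A) : nat -> A -> A :=
  fun i a => match i with
             | 0%N => a
             | 1%N => mulA theta a - mulA a theta
             | _ => phi i a end.

(* coefficients of psi^t_al = id + t (l_theta - r_theta + H(theta, T_al -)
   - H(T_al -, theta)) + sum_{i>=2} t^i psi_i *)
Definition psi_coef (k : fieldType) (A M : lmodType k) (Om : Type)
  (l : A -> M -> M) (r : M -> A -> M) (H : A -> A -> M) (T : Om -> M -> A)
  (theta : A) (psi : nat -> Om -> M -> M) : nat -> Om -> M -> M :=
  fun i al u => match i with
             | 0%N => u
             | 1%N => l theta u - r u theta + H theta (T al u) - H (T al u) theta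
             | _ => psi i al u end.

(* equivalence of two deformations Tt and Tb; phi^t o Tt_al = Tb_al o psi^t_al
   written coefficientwise *)
Definition equiv_deformations (k : fieldType) (A M : lmodType k) (Om : Type)
  (mulA : A -> A -> A) (l : A -> M -> M) (r : M -> A -> M)
  (H : A -> A -> M) (T : Om -> M -> A) (Tt Tb : nat -> Om -> M -> A) : Prop :=
  exists (theta : A) (phi : nat -> A -> A) (psi : nat -> Om -> M -> M),
    (forall i, (2 <= i)%N -> klinear (phi i)) /\
    (forall i al, (2 <= i)%N -> klinear (psi i al)) /\
    (forall (n : nat) al u,
       \sum_(i < n.+1) phi_coef mulA theta phi i (Tt (n - i)%N al u) =
       \sum_(i < n.+1) Tb i al (psi_coef l r H T theta psi (n - i)%N al u)).

(* Main.v *)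
From HB Require Import structures.
From Stdlib Require Import ClassicalEpsilon.
From mathcomp Require Import all_boot all_order all_algebra.
Require Import Defs.
Set Implicit Arguments. Unset Strict Implicit. Unset Printing Implicit Defensive.
Import GRing.Theory.
Local Open Scope ring_scope.

Lemma canc_here (V : zmodType) (x y s t : V) : y = - x -> s = t -> x + (y + s) = t.
Proof. by move=> -> <-; rewrite addrA subrr add0r. Qed.
Lemma canc_here1 (V : zmodType) (x y t : V) : y = - x -> t = 0 -> x + y = t.
Proof. by move=> -> ->; rewrite subrr. Qed.
Lemma canc_next (V : zmodType) (x y s t : V) : x + s = t - y -> x + (y + s) = t.
Proof. by rewrite addrCA => ->; rewrite addrC subrK. Qed.
Lemma canc_zero (V : zmodType) (s t : V) : s - t = 0 -> s = t.
Proof. by move/eqP; rewrite subr_eq0 => /eqP. Qed.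

Ltac acnorm := rewrite ?opprD ?opprK ?oppr0 -?addrA ?addr0 ?add0r.
Ltac canc1 :=
  first [ apply: canc_here; [ rewrite ?opprK; reflexivity | ]
        | apply: canc_here1; [ rewrite ?opprK; reflexivity | ]
        | apply: canc_next; canc1 ].
Ltac acsolve := apply: canc_zero; acnorm;
  repeat (first [ reflexivity | canc1; apply: canc_zero; acnorm ]).

Lemma test (V : zmodType) (a b c d : V) : a + (b - c) + d = d - (c - a) + b.
Proof. acsolve. Qed.

Section Klin.
Variable k : fieldType.
Variables U V : lmodType k.
Variable f : U -> V.
Hypothesis hf : klinear f.
Lemma kl0 : f 0 = 0.
Proof. have h := hf 1 0 0; rewrite !scale1r addr0 in h. by apply: (addrI (f 0)); rewrite addr0 -h. Qed.
Lemma klD x y : f (x + y) = f x + f y.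
Proof. by have := hf 1 x y; rewrite !scale1r. Qed.
Lemma klZ c x : f (c *: x) = c *: f x.
Proof. by have := hf c x 0; rewrite !addr0 kl0 addr0. Qed.
Lemma klN x : f (- x) = - f x.
Proof. by rewrite -scaleN1r klZ scaleN1r. Qed.
Lemma klB x y : f (x - y) = f x - f y.
Proof. by rewrite klD klN. Qed.
Lemma klsum I (s : seq I) (P : pred I) (F : I -> U) :
  f (\sum_(i <- s | P i) F i) = \sum_(i <- s | P i) f (F i).
Proof. elim/big_rec2: _ => [|i y1 y2 _ <-]; by rewrite ?kl0 ?klD. Qed.
End Klin.
Section Main.
Variables (k : fieldType) (A M : lmodType k) (mulA : A -> A -> A)
  (l : A -> M -> M) (r : M -> A -> M) (H : A -> A -> M).
Hypotheses (HA : assoc_alg mulA) (HM : bimodule mulA l r) (HH : hoch_2cocycle mulA l r H).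

Let mlr a : klinear (mulA a). Proof. by case: HA => _ []. Qed.
Let mll b : klinear (fun a => mulA a b). Proof. by case: HA => _ []. Qed.
Let llr a : klinear (l a). Proof. by case: HM. Qed.
Let lll u : klinear (fun a => l a u). Proof. by case: HM => _ []. Qed.
Let rll a : klinear (fun u => r u a). Proof. by case: HM => _ [] _ []. Qed.
Let rlr u : klinear (r u). Proof. by case: HM => _ [] _ [] _ []. Qed.
Let Hlr a : klinear (H a). Proof. by case: HH. Qed.
Let Hll b : klinear (fun a => H a b). Proof. by case: HH => _ []. Qed.

Lemma mADr a x y : mulA a (x + y) = mulA a x + mulA a y. Proof. exact: klD. Qed.
Lemma mADl a x y : mulA (x + y) a = mulA x a + mulA y a. Proof. exact: (klD (mll a)). Qed.
Lemma mAZr a c x : mulA a (c *: x) = c *: mulA a x. Proof. exact: klZ. Qed.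
Lemma mAZl a c x : mulA (c *: x) a = c *: mulA x a. Proof. exact: (klZ (mll a)). Qed.
Lemma mANr a x : mulA a (- x) = - mulA a x. Proof. exact: klN. Qed.
Lemma mANl a x : mulA (- x) a = - mulA x a. Proof. exact: (klN (mll a)). Qed.
Lemma mA0r a : mulA a 0 = 0. Proof. exact: kl0. Qed.
Lemma mA0l a : mulA 0 a = 0. Proof. exact: (kl0 (mll a)). Qed.
Lemma lDr a x y : l a (x + y) = l a x + l a y. Proof. exact: klD. Qed.
Lemma lDl a x y : l (x + y) a = l x a + l y a. Proof. exact: (klD (lll a)). Qed.
Lemma lZr a c x : l a (c *: x) = c *: l a x. Proof. exact: klZ. Qed.
Lemma lZl a c x : l (c *: x) a = c *: l x a. Proof. exact: (klZ (lll a)). Qed.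
Lemma lNr a x : l a (- x) = - l a x. Proof. exact: klN. Qed.
Lemma lNl a x : l (- x) a = - l x a. Proof. exact: (klN (lll a)). Qed.
Lemma l0r a : l a 0 = 0. Proof. exact: kl0. Qed.
Lemma l0l a : l 0 a = 0. Proof. exact: (kl0 (lll a)). Qed.
Lemma rDr a x y : r a (x + y) = r a x + r a y. Proof. exact: klD. Qed.
Lemma rDl a x y : r (x + y) a = r x a + r y a. Proof. exact: (klD (rll a)). Qed.
Lemma rZr a c x : r a (c *: x) = c *: r a x. Proof. exact: klZ. Qed.
Lemma rZl a c x : r (c *: x) a = c *: r x a. Proof. exact: (klZ (rll a)). Qed.
Lemma rNr a x : r a (- x) = - r a x. Proof. exact: klN. Qed.
Lemma rNl a x : r (- x) a = - r x a. Proof. exact: (klN (rll a)). Qed.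
Lemma r0r a : r a 0 = 0. Proof. exact: kl0. Qed.
Lemma r0l a : r 0 a = 0. Proof. exact: (kl0 (rll a)). Qed.
Lemma HDr a x y : H a (x + y) = H a x + H a y. Proof. exact: klD. Qed.
Lemma HDl a x y : H (x + y) a = H x a + H y a. Proof. exact: (klD (Hll a)). Qed.
Lemma HZr a c x : H a (c *: x) = c *: H a x. Proof. exact: klZ. Qed.
Lemma HZl a c x : H (c *: x) a = c *: H x a. Proof. exact: (klZ (Hll a)). Qed.
Lemma HNr a x : H a (- x) = - H a x. Proof. exact: klN. Qed.
Lemma HNl a x : H (- x) a = - H x a. Proof. exact: (klN (Hll a)). Qed.
Lemma H0r a : H a 0 = 0. Proof. exact: kl0. Qed.
Lemma H0l a : H 0 a = 0. Proof. exact: (kl0 (Hll a)). Qed.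

Ltac linexp := repeat progress rewrite ?mADr ?mADl ?mAZr ?mAZl ?mANr ?mANl ?mA0r ?mA0l
  ?lDr ?lDl ?lZr ?lZl ?lNr ?lNl ?l0r ?l0l ?rDr ?rDl ?rZr ?rZl ?rNr ?rNl ?r0r ?r0l
  ?HDr ?HDl ?HZr ?HZl ?HNr ?HNl ?H0r ?H0l ?scalerDr ?scalerDl ?scalerA ?scaler0 ?scale0r ?scale1r ?scalerN ?scaleNr.

Local Notation scE := (scalerDr, scalerDl, scalerA, scaler0, scale0r, scale1r, scalerN, scaleNr).

Definition RR := (k * A * M)%type.
HB.instance Definition _ := GRing.Zmodule.on RR.
Definition mk (c : k) (a : A) (u : M) : RR := ((c, a), u).
Definition pk (x : RR) : k := x.1.1.
Definition pa (x : RR) : A := x.1.2.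
Definition pm (x : RR) : M := x.2.
Definition mulR (x y : RR) : RR :=
  mk (pk x * pk y) ((pk x *: pa y : A) + pk y *: pa x + mulA (pa x) (pa y))
     ((pk x *: pm y : M) + pk y *: pm x + l (pa x) (pm y) + r (pm x) (pa y) + H (pa x) (pa y)).
Definition oneR : RR := mk 1 0 0.

Lemma RR_eq (x y : RR) : pk x = pk y -> pa x = pa y -> pm x = pm y -> x = y.
Proof. by case: x => [[??]?]; case: y => [[??]?]; rewrite /pk /pa /pm /= => -> -> ->. Qed.

Lemma mulRA : associative mulR.
Proof.
move=> x y z; apply: RR_eq; rewrite /mulR /mk /pk /pa /pm /=.
- exact: mulrA.
- linexp; case: HA => hA _. rewrite hA.
  rewrite (mulrC z.1.1 x.1.1) (mulrC z.1.1 y.1.1). acsolve.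
- linexp.
  case: HM => _ [_ [_ [_ [hl [hr hlr]]]]].
  rewrite !hl !hr !hlr.
  case: HH => _ [_ hc].
  have e : H (mulA x.1.2 y.1.2) z.1.2 = l x.1.2 (H y.1.2 z.1.2) + H x.1.2 (mulA y.1.2 z.1.2) - r (H x.1.2 y.1.2) z.1.2.
    apply/eqP; rewrite -subr_eq0 -oppr_eq0; apply/eqP; rewrite -[RHS](hc x.1.2 y.1.2 z.1.2). acsolve.
  rewrite e (mulrC z.1.1 x.1.1) (mulrC z.1.1 y.1.1). acsolve.
Qed.
Lemma pkD x y : pk (x + y) = pk x + pk y. Proof. by []. Qed.
Lemma paD x y : pa (x + y) = pa x + pa y. Proof. by []. Qed.
Lemma pmD x y : pm (x + y) = pm x + pm y. Proof. by []. Qed.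
Lemma pkN x : pk (- x) = - pk x. Proof. by []. Qed.
Lemma paN x : pa (- x) = - pa x. Proof. by []. Qed.
Lemma pmN x : pm (- x) = - pm x. Proof. by []. Qed.
Lemma pk0 : pk 0 = 0. Proof. by []. Qed.
Lemma pa0 : pa 0 = 0. Proof. by []. Qed.
Lemma pm0 : pm 0 = 0. Proof. by []. Qed.
Lemma pkM x y : pk (mulR x y) = pk x * pk y. Proof. by []. Qed.
Lemma paM x y : pa (mulR x y) = pk x *: pa y + pk y *: pa x + mulA (pa x) (pa y). Proof. by []. Qed.
Lemma pmM x y : pm (mulR x y) = pk x *: pm y + pk y *: pm x + l (pa x) (pm y) + r (pm x) (pa y) + H (pa x) (pa y). Proof. by []. Qed.
Lemma pk1 : pk oneR = 1. Proof. by []. Qed.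
Lemma pa1 : pa oneR = 0. Proof. by []. Qed.
Lemma pm1 : pm oneR = 0. Proof. by []. Qed.

Ltac pexp := rewrite ?pkD ?paD ?pmD ?pkN ?paN ?pmN ?pk0 ?pa0 ?pm0 ?pkM ?paM ?pmM ?pk1 ?pa1 ?pm1.

Lemma mul1R : left_id oneR mulR.
Proof. move=> x; apply: RR_eq; pexp; linexp; rewrite ?mul1r ?addr0 //. Qed.
Lemma mulR1 : right_id oneR mulR.
Proof. move=> x; apply: RR_eq; pexp; linexp; rewrite ?mulr1 ?addr0 ?add0r //. Qed.
Lemma mulRDl : left_distributive mulR +%R.
Proof. move=> x y z; apply: RR_eq; pexp; linexp; rewrite ?mulrDl; acsolve. Qed.
Lemma mulRDr : right_distributive mulR +%R.
Proof. move=> x y z; apply: RR_eq; pexp; linexp; rewrite ?mulrDr; acsolve. Qed.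
Lemma oneR_neq0 : oneR != 0.
Proof. apply/eqP => /(congr1 pk); rewrite pk1 pk0; apply/eqP; exact: oner_neq0. Qed.

HB.instance Definition _ := GRing.Zmodule_isNzRing.Build RR mulRA mul1R mulR1 mulRDl mulRDr oneR_neq0.

Lemma test_ring (x y : RR) : x * y = mulR x y. Proof. by []. Qed.
Check (1 : {poly RR}).

Lemma pkMr (x y : RR) : pk (x * y) = pk x * pk y. Proof. by []. Qed.
Lemma paMr (x y : RR) : pa (x * y) = pk x *: pa y + pk y *: pa x + mulA (pa x) (pa y). Proof. by []. Qed.
Lemma pmMr (x y : RR) : pm (x * y) = pk x *: pm y + pk y *: pm x + l (pa x) (pm y) + r (pm x) (pa y) + H (pa x) (pa y). Proof. by []. Qed.
Lemma pk1r : pk (1 : RR) = 1. Proof. by []. Qed.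
Lemma pa1r : pa (1 : RR) = 0. Proof. by []. Qed.
Lemma pm1r : pm (1 : RR) = 0. Proof. by []. Qed.
Lemma pkB (x y : RR) : pk (x - y) = pk x - pk y. Proof. by []. Qed.
Lemma paB (x y : RR) : pa (x - y) = pa x - pa y. Proof. by []. Qed.
Lemma pmB (x y : RR) : pm (x - y) = pm x - pm y. Proof. by []. Qed.

Definition ia (a : A) : RR := mk 0 a 0.
Definition im (u : M) : RR := mk 0 0 u.
Definition sc (c : k) : RR := mk c 0 0.
Lemma pk_ia a : pk (ia a) = 0. Proof. by []. Qed.
Lemma pa_ia a : pa (ia a) = a. Proof. by []. Qed.
Lemma pm_ia a : pm (ia a) = 0. Proof. by []. Qed.
Lemma pk_im a : pk (im a) = 0. Proof. by []. Qed.
Lemma pa_im a : pa (im a) = 0. Proof. by []. Qed.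
Lemma pm_im a : pm (im a) = a. Proof. by []. Qed.
Lemma pk_sc a : pk (sc a) = a. Proof. by []. Qed.
Lemma pa_sc a : pa (sc a) = 0. Proof. by []. Qed.
Lemma pm_sc a : pm (sc a) = 0. Proof. by []. Qed.

Ltac pexp2 := rewrite ?pkD ?paD ?pmD ?pkN ?paN ?pmN ?pkB ?paB ?pmB ?pk0 ?pa0 ?pm0 ?pkMr ?paMr ?pmMr
  ?pk1r ?pa1r ?pm1r ?pk_ia ?pa_ia ?pm_ia ?pk_im ?pa_im ?pm_im ?pk_sc ?pa_sc ?pm_sc.
Ltac simp := repeat progress (pexp2; linexp; rewrite ?mul0r ?mulr0 ?mul1r ?mulr1 ?addr0 ?add0r ?subr0 ?sub0r ?oppr0).

Lemma sc_comm c (x : RR) : sc c * x = x * sc c.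
Proof. by apply: RR_eq; simp; rewrite ?(mulrC c). Qed.
Lemma ia_lin c a b : ia (c *: a + b) = sc c * ia a + ia b.
Proof. by apply: RR_eq; simp. Qed.
Lemma im_lin c a b : im (c *: a + b) = sc c * im a + im b.
Proof. by apply: RR_eq; simp. Qed.
Lemma iaD a b : ia (a + b) = ia a + ia b.
Proof. by apply: RR_eq; simp. Qed.
Lemma iaN a : ia (- a) = - ia a.
Proof. by apply: RR_eq; simp. Qed.
Lemma ia0 : ia 0 = 0.
Proof. by apply: RR_eq; simp. Qed.
Lemma pa_scM c x : pa (sc c * x) = c *: pa x.
Proof. by simp. Qed.
Lemma pm_scM c x : pm (sc c * x) = c *: pm x.
Proof. by simp. Qed.
Lemma pk_sum I (s : seq I) (P : pred I) (F : I -> RR) :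
  pk (\sum_(i <- s | P i) F i) = \sum_(i <- s | P i) pk (F i).
Proof. by elim/big_rec2: _ => [|i y1 y2 _ <-]. Qed.
Lemma pa_sum I (s : seq I) (P : pred I) (F : I -> RR) :
  pa (\sum_(i <- s | P i) F i) = \sum_(i <- s | P i) pa (F i).
Proof. by elim/big_rec2: _ => [|i y1 y2 _ <-]. Qed.
Lemma pm_sum I (s : seq I) (P : pred I) (F : I -> RR) :
  pm (\sum_(i <- s | P i) F i) = \sum_(i <- s | P i) pm (F i).
Proof. by elim/big_rec2: _ => [|i y1 y2 _ <-]. Qed.

Definition eqt n (p q : {poly RR}) := forall i, (i <= n)%N -> p`_i = q`_i.
Lemma eqt_refl n p : eqt n p p. Proof. by []. Qed.
Lemma eqt_sym n p q : eqt n p q -> eqt n q p. Proof. by move=> e i /e. Qed.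
Lemma eqt_trans n p q s : eqt n p q -> eqt n q s -> eqt n p s.
Proof. by move=> e1 e2 i hi; rewrite e1 // e2. Qed.
Lemma eqt_le m n p q : (m <= n)%N -> eqt n p q -> eqt m p q.
Proof. by move=> hmn e i hi; apply: e; apply: leq_trans hmn. Qed.
Lemma eqt_mull n p q s : eqt n p q -> eqt n (s * p) (s * q).
Proof.
move=> e i hi; rewrite !coefM; apply: eq_bigr => j _; rewrite e //.
by apply: leq_trans (leq_subr _ _) hi.
Qed.
Lemma eqt_mulr n p q s : eqt n p q -> eqt n (p * s) (q * s).
Proof.
move=> e i hi; rewrite !coefM; apply: eq_bigr => j _; rewrite e //.
by apply: leq_trans hi; rewrite -ltnS.
Qed.
Lemma eqt_add n p q p' q' : eqt n p q -> eqt n p' q' -> eqt n (p + p') (q + q').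
Proof. by move=> e e' i hi; rewrite !coefD e ?e'. Qed.
Lemma eqt_M n p q p' q' : eqt n p q -> eqt n p' q' -> eqt n (p * p') (q * q').
Proof. move=> e e'; apply: eqt_trans (eqt_mulr _ e) (eqt_mull _ e'). Qed.

Lemma inv_uniq n g d1 d2 : eqt n (g * d1) 1 -> eqt n (d2 * g) 1 -> eqt n d1 d2.
Proof.
move=> h1 h2.
apply: (@eqt_trans _ _ (d2 * g * d1)).
  by apply: eqt_sym; rewrite -[X in eqt _ _ X]mul1r; apply: eqt_mulr.
by rewrite -mulrA -[X in eqt _ _ X]mulr1; apply: eqt_mull.
Qed.

Lemma Xpow_small n m (q : {poly RR}) : (n < m)%N -> eqt n ('X^m * q) 0.
Proof. move=> hnm i hi; rewrite coefXnM coef0 ifT //; exact: leq_ltn_trans hnm. Qed.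

Definition qn (N : nat) (c : nat -> A) : {poly RR} := - \poly_(i < N) ia (c i.+1).
Definition G (N : nat) (c : nat -> A) : {poly RR} := 1 - 'X * qn N c.
Definition D (N : nat) (c : nat -> A) : {poly RR} := \sum_(j < N.+1) ('X * qn N c) ^+ j.

Lemma GD N c : eqt N (G N c * D N c) 1 /\ eqt N (D N c * G N c) 1.
Proof.
set y := 'X * qn N c.
have hy : y ^+ N.+1 = 'X^(N.+1) * (qn N c) ^+ N.+1.
  by rewrite /y exprMn_comm //; apply: commr_sym; apply: commr_polyX.
have e1 : G N c * D N c = 1 - y ^+ N.+1.
  by rewrite /G /D -/y -opprB mulNr -subrX1 opprB.
have cm : GRing.comm (y - 1) (\sum_(j < N.+1) y ^+ j).
  apply: commr_sum => j _; apply: commr_sym; apply: commrB; [exact: commr_sym (commrX _ (commr_refl y))|exact: commr1].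
have e2 : D N c * G N c = 1 - y ^+ N.+1.
  by rewrite /G /D -/y -opprB mulrN -cm -subrX1 opprB.
have z : eqt N (1 - y ^+ N.+1) 1.
  move=> i hi; rewrite coefB hy (@Xpow_small N N.+1 _ (ltnSn N) i hi) coef0 subr0 //.
by rewrite e1 e2.
Qed.

Lemma coefG N c i : (G N c)`_i = if i == 0%N then 1 else if (i <= N)%N then ia (c i) else 0.
Proof.
rewrite /G /qn coefB coef1 coefXM; case: i => [|i] /=; first by rewrite subr0.
by rewrite coefN coef_poly sub0r opprK; case: ifP.
Qed.

Lemma G_trunc m N c : (m <= N)%N -> eqt m (G N c) (G m c).
Proof.
move=> hmN i hi; rewrite !coefG; case: (i == 0%N) => //.
by rewrite hi (leq_trans hi hmN).
Qed.

Lemma qn_ext N c c' : (forall i, (0 < i <= N)%N -> c i = c' i) -> qn N c = qn N c'.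
Proof. by move=> e; rewrite /qn; congr (- _); apply: eq_poly => i hi; rewrite e. Qed.
Lemma G_ext N c c' : (forall i, (0 < i <= N)%N -> c i = c' i) -> G N c = G N c'.
Proof. by move=> e; rewrite /G (qn_ext e). Qed.
Lemma D_ext N c c' : (forall i, (0 < i <= N)%N -> c i = c' i) -> D N c = D N c'.
Proof. by move=> e; rewrite /D (qn_ext e). Qed.

Lemma D_trunc m N c : (m <= N)%N -> eqt m (D N c) (D m c).
Proof.
move=> hmN; apply: eqt_sym; apply: (@inv_uniq _ (G m c)); first by case: (GD m c).
apply: (@eqt_trans _ _ (D N c * G N c)).
  by apply: eqt_mull; apply: eqt_sym; apply: G_trunc.
by apply: (eqt_le hmN); case: (GD N c).
Qed.

Lemma G0 N c : (G N c)`_0 = 1. Proof. by rewrite coefG. Qed.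
Lemma D0 N c : (D N c)`_0 = 1.
Proof.
case: (GD N c) => [h _]; have := h 0%N (leq0n _).
by rewrite coef0M G0 mul1r coef1.
Qed.

Definition Phi N c (p : {poly RR}) := G N c * p * D N c.

Lemma Phi_trunc m N c p q : (m <= N)%N -> eqt m p q -> eqt m (Phi N c p) (Phi m c q).
Proof.
move=> hmN e; rewrite /Phi; apply: eqt_M; first apply: eqt_M => //.
- exact: G_trunc.
- exact: D_trunc.
Qed.

Lemma Phi0 N c p : (Phi N c p)`_0 = p`_0.
Proof. by rewrite /Phi !coef0M G0 D0 mul1r mulr1. Qed.

Lemma Phi_X N c j p : Phi N c ('X^j * p) = 'X^j * Phi N c p.
Proof. by rewrite /Phi mulrA (commr_polyXn (G N c) j) -!mulrA. Qed.

Lemma comm_scP (s : k) (p : {poly RR}) : p * (sc s)%:P = (sc s)%:P * p.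
Proof. by apply/polyP => i; rewrite coefMC coefCM sc_comm. Qed.

Lemma Phi_sc N c s p : Phi N c ((sc s)%:P * p) = (sc s)%:P * Phi N c p.
Proof. by rewrite /Phi mulrA comm_scP -!mulrA. Qed.

Lemma PhiD N c p q : Phi N c (p + q) = Phi N c p + Phi N c q.
Proof. by rewrite /Phi mulrDr mulrDl. Qed.
Lemma PhiB N c p q : Phi N c (p - q) = Phi N c p - Phi N c q.
Proof. by rewrite /Phi mulrBr mulrBl. Qed.
Lemma Phi_sum N c (I : Type) (s : seq I) (F : I -> {poly RR}) :
  Phi N c (\sum_(i <- s) F i) = \sum_(i <- s) Phi N c (F i).
Proof. elim/big_rec2: _ => [|i y1 y2 _ <-]; by rewrite ?PhiD // /Phi mulr0 mul0r. Qed.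

Lemma G1 N c : (0 < N)%N -> (G N c)`_1 = ia (c 1%N).
Proof. by move=> hN; rewrite coefG /= hN. Qed.
Lemma D1 N c : (0 < N)%N -> (D N c)`_1 = - ia (c 1%N).
Proof.
move=> hN; case: (GD N c) => [h _]; have := h 1%N hN.
rewrite coefM big_ord_recr big_ord1 /= subn0 subnn G0 G1 // D0 coef1 /= mul1r mulr1 => e.
by apply/eqP; rewrite -subr_eq0 opprK e.
Qed.

Lemma Phi_update N c c' a p : (0 < N)%N -> c' N = c N + a ->
  (forall i, (i < N)%N -> c' i = c i) ->
  (Phi N c' p)`_N = (Phi N c p)`_N + ia a * p`_0 - p`_0 * ia a.
Proof.
move=> hN ecN ec.
set Dl := 'X^N * (ia a)%:P.
have eG : G N c' = G N c + Dl.
  apply/polyP => i; rewrite coefD /Dl coefXnM coefC !coefG.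
  case: (ltngtP i N) => hi.
  - by rewrite addr0 ec.
  - by rewrite subn_eq0 leqNgt hi /= addr0.
  - by rewrite hi subnn eqxx (gtn_eqF hN) ecN iaD.
have hNN : (N < N + N)%N by rewrite -{1}(addn0 N) ltn_add2l.
have eqD : eqt N (D N c') (D N c - Dl).
  apply: eqt_sym; apply: (@inv_uniq _ (G N c')); last by rewrite -?eG; case: (GD N c').
  rewrite eG mulrDl !mulrBr.
  have h1 : eqt N (G N c * Dl) Dl.
    move=> i hi; rewrite /Dl mulrA (commr_polyXn (G N c) N) -mulrA !coefXnM.
    case: ifP => // hiN; rewrite coefMC coefC; have -> : (i - N = 0)%N.
      by apply/eqP; rewrite subn_eq0.
    by rewrite G0 mul1r.
  have h2 : eqt N (Dl * D N c) Dl.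
    move=> i hi; rewrite /Dl -mulrA !coefXnM.
    case: ifP => // hiN; rewrite coefCM coefC; have -> : (i - N = 0)%N.
      by apply/eqP; rewrite subn_eq0.
    by rewrite D0 mulr1.
  have h3 : eqt N (Dl * Dl) 0.
    have -> : Dl * Dl = 'X^(N + N) * ((ia a)%:P * (ia a)%:P).
      rewrite /Dl exprD -!mulrA; congr (_ * _).
      by rewrite mulrA (commr_polyXn _ N) -mulrA.
    exact: Xpow_small.
  case: (GD N c) => [h0 _].
  move=> i hi; rewrite !coefD !coefN h0 // h1 // h2 // h3 // coef0.
  by rewrite subr0 subrK.
rewrite /Phi (eqt_mull _ eqD) // eG.
have eG0 := G0 N c; have eD0 := D0 N c.
move: (G N c) (D N c) eG0 eD0 => g d eG0 eD0.
rewrite mulrDl !mulrDl !mulrBr !coefD !coefN.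
have -> : (Dl * p * d)`_N = ia a * p`_0.
  by rewrite /Dl -!mulrA coefXnM ltnn subnn !coef0M coefC /= eD0 mulr1.
have -> : (g * p * Dl)`_N = p`_0 * ia a.
  rewrite /Dl mulrA (commr_polyXn _ N) -mulrA coefXnM ltnn subnn coef0M coefC /= coef0M eG0 mul1r.
  done.
have -> : (Dl * p * Dl)`_N = 0.
  have -> : Dl * p * Dl = 'X^(N + N) * ((ia a)%:P * p * (ia a)%:P).
    rewrite /Dl exprD -!mulrA; congr (_ * _).
    by rewrite !mulrA (commr_polyXn _ N) -!mulrA.
  by rewrite coefXnM hNN.
rewrite subr0; acsolve.
Qed.

Variables (Om : Type) (op : Om -> Om -> Om) (T : Om -> M -> A).
Hypothesis HT : twisted_Oop_family op mulA l r H T.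
Variable Tt : nat -> Om -> M -> A.
Hypothesis HTt : formal_deformation op mulA l r H T Tt.

Let Tlin al : klinear (T al). Proof. by case: HT. Qed.
Let Ttlin i al : klinear (Tt i al). Proof. by case: HTt => _ []. Qed.
Lemma TD al x y : T al (x + y) = T al x + T al y. Proof. exact: klD. Qed.
Lemma TN al x : T al (- x) = - T al x. Proof. exact: klN. Qed.
Lemma T0 al : T al 0 = 0. Proof. exact: kl0. Qed.
Lemma TZ al s x : T al (s *: x) = s *: T al x. Proof. exact: klZ. Qed.
Lemma Tsum al I (s : seq I) (F : I -> M) : T al (\sum_(i <- s) F i) = \sum_(i <- s) T al (F i).
Proof. exact: klsum. Qed.
Lemma Tt0 al u : Tt 0 al u = T al u. Proof. by case: HTt => ->. Qed.
Lemma TOop al be u v : mulA (T al u) (T be v) =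
  T (op al be) (l (T al u) v + r u (T be v) + H (T al u) (T be v)).
Proof. by case: HT => _ ->. Qed.

Ltac texp := repeat progress rewrite ?TD ?TN ?T0 ?TZ.

Definition Gam al (x : RR) : A := pa x - T al (pm x).
Lemma GamD al x y : Gam al (x + y) = Gam al x + Gam al y.
Proof. rewrite /Gam paD pmD TD; acsolve. Qed.
Lemma GamN al x : Gam al (- x) = - Gam al x.
Proof. by rewrite /Gam paN pmN TN opprB opprK addrC. Qed.
Lemma GamB al x y : Gam al (x - y) = Gam al x - Gam al y.
Proof. by rewrite GamD GamN. Qed.
Lemma Gam0 al : Gam al 0 = 0.
Proof. by rewrite /Gam pa0 pm0 T0 subr0. Qed.
Lemma Gam_sum al I (s : seq I) (F : I -> RR) :
  Gam al (\sum_(i <- s) F i) = \sum_(i <- s) Gam al (F i).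
Proof. elim/big_rec2: _ => [|i y1 y2 _ <-]; by rewrite ?Gam0 ?GamD. Qed.
Lemma Gam_sc al s x : Gam al (sc s * x) = s *: Gam al x.
Proof. by rewrite /Gam pa_scM pm_scM TZ scalerBr. Qed.

Lemma Gam_mul al be x y : pk x = 0 -> pk y = 0 ->
  Gam (op al be) (x * y) =
    mulA (Gam al x) (pa y) + mulA (pa x) (Gam be y) - mulA (Gam al x) (Gam be y)
    - T (op al be) (l (Gam al x) (pm y) + r (pm x) (Gam be y) + H (Gam al x) (pa y)
                    + H (pa x) (Gam be y) - H (Gam al x) (Gam be y)).
Proof.
move=> hx hy; rewrite /Gam paMr pmMr hx hy !scale0r !add0r.
have ea : pa x = T al (pm x) + (pa x - T al (pm x)) by rewrite addrC subrK.
have eb : pa y = T be (pm y) + (pa y - T be (pm y)) by rewrite addrC subrK.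
move: (pa x - T al (pm x)) (pa y - T be (pm y)) ea eb => e f -> ->.
linexp; rewrite TOop; texp; acsolve.
Qed.

Definition Yp N al u : {poly RR} := (im u)%:P + \poly_(i < N.+1) ia (Tt i al u).
Definition Z N c al u := Phi N c (Yp N al u).

Lemma coefYp N al u i : (i <= N)%N ->
  (Yp N al u)`_i = (if i == 0%N then im u else 0) + ia (Tt i al u).
Proof. by move=> hi; rewrite /Yp coefD coefC coef_poly ltnS hi. Qed.
Lemma Yp0 N al u : (Yp N al u)`_0 = ia (T al u) + im u.
Proof. by rewrite coefYp // Tt0 addrC. Qed.
Lemma pk_Yp N al u i : pk ((Yp N al u)`_i) = 0.
Proof. rewrite /Yp coefD coefC coef_poly pkD; by case: (i == 0%N); case: (i < N.+1)%N; rewrite ?pk_im ?pk_ia ?pk0 addr0. Qed.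
Lemma Yp_trunc m N al u : (m <= N)%N -> eqt m (Yp N al u) (Yp m al u).
Proof. by move=> hmN i hi; rewrite !coefYp // (leq_trans hi hmN). Qed.
Lemma Yp_lin N al s u v : Yp N al (s *: u + v) = (sc s)%:P * Yp N al u + Yp N al v.
Proof.
apply/polyP => i; rewrite [RHS]coefD coefCM /Yp !coefD !coefC !coef_poly.
case: ifP => _; case: ifP => _; rewrite ?mulr0 ?addr0 ?add0r.
- have := Ttlin i al s u v => ->; rewrite ia_lin im_lin mulrDr; acsolve.
- by rewrite im_lin.
- by have := Ttlin i al s u v => ->; rewrite ia_lin.
- by rewrite mulr0.
Qed.

Lemma pk_mul_l (p q : {poly RR}) : (forall i, pk (p`_i) = 0) -> forall i, pk ((p * q)`_i) = 0.
Proof. move=> h i; rewrite coefM pk_sum big1 // => j _; by rewrite pkMr h mul0r. Qed.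
Lemma pk_mul_r (p q : {poly RR}) : (forall i, pk (q`_i) = 0) -> forall i, pk ((p * q)`_i) = 0.
Proof. move=> h i; rewrite coefM pk_sum big1 // => j _; by rewrite pkMr h mulr0. Qed.
Lemma pk_Phi N c (p : {poly RR}) : (forall i, pk (p`_i) = 0) -> forall i, pk ((Phi N c p)`_i) = 0.
Proof. move=> h i; rewrite /Phi; apply: pk_mul_l => j; exact: pk_mul_r h j. Qed.
Lemma pk_Z N c al u i : pk ((Z N c al u)`_i) = 0.
Proof. by apply: pk_Phi => j; apply: pk_Yp. Qed.

Lemma Z_trunc i N c al u : (i <= N)%N -> (Z N c al u)`_i = (Z i c al u)`_i.
Proof. move=> hi; apply: (Phi_trunc _ hi) => //; exact: Yp_trunc. Qed.
Lemma Z0 N c al u : (Z N c al u)`_0 = ia (T al u) + im u.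
Proof. by rewrite /Z Phi0 Yp0. Qed.
Lemma Z_lin N c al s u v : Z N c al (s *: u + v) = (sc s)%:P * Z N c al u + Z N c al v.
Proof. by rewrite /Z Yp_lin PhiD Phi_sc. Qed.

Lemma coef_sumXn n i (F : nat -> {poly RR}) : (i <= n)%N ->
  (\sum_(j < n.+1) 'X^j * F j)`_i = \sum_(j < i.+1) (F j)`_(i - j).
Proof.
elim: n => [|n IH] hi.
  by move: hi; rewrite leqn0 => /eqP ->; rewrite big_ord1 big_ord1 coefXnM.
rewrite big_ord_recr coefD /=.
case: (ltngtP i n.+1) => h.
- by rewrite IH // coefXnM h addr0.
- by move: hi; rewrite leqNgt h.
- subst i; rewrite coefXnM ltnn subnn [RHS]big_ord_recr /= subnn; congr (_ + _).
  rewrite coef_sum; apply: eq_bigr => j _; rewrite coefXnM.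
  by rewrite ltnNge ltnW // ltnS ltn_ord.
Qed.

Lemma pa_Yp n al u i : (i <= n)%N -> pa ((Yp n al u)`_i) = Tt i al u.
Proof. by move=> hi; rewrite coefYp // paD pa_ia; case: ifP; rewrite ?pa_im ?pa0 add0r. Qed.
Lemma pm_Yp n al u i : (i <= n)%N -> pm ((Yp n al u)`_i) = if i == 0%N then u else 0.
Proof. by move=> hi; rewrite coefYp // pmD pm_ia addr0; case: ifP; rewrite ?pm_im ?pm0. Qed.

Definition stuff al be u v m :=
  l (Tt m al u) v + r u (Tt m be v) + \sum_(j < m.+1) H (Tt j al u) (Tt (m - j) be v).

Lemma w_eq n al be u v m : (m <= n)%N ->
  pm ((Yp n al u * Yp n be v)`_m) = stuff al be u v m.
Proof.
move=> hm; rewrite coefM pm_sum /stuff.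
have hj : forall j : 'I_m.+1, (j <= n)%N.
  by move=> j; apply: leq_trans hm; rewrite -ltnS.
have hj' : forall j : 'I_m.+1, (m - j <= n)%N.
  by move=> j; apply: leq_trans hm; apply: leq_subr.
rewrite (eq_bigr (fun j : 'I_m.+1 => l (Tt j al u) (if (m - j == 0)%N then v else 0)
   + r (if (nat_of_ord j == 0)%N then u else 0) (Tt (m - j) be v) + H (Tt j al u) (Tt (m - j) be v))); last first.
  move=> j _; rewrite pmMr !pk_Yp !scale0r !add0r pa_Yp // pa_Yp // pm_Yp // pm_Yp //.
rewrite !big_split /=; congr (_ + _ + _).
- rewrite big_ord_recr /= subnn /= big1 ?add0r // => j _.
  by rewrite subn_eq0 leqNgt ltn_ord /= l0r.
- rewrite big_ord_recl /= subn0 /= big1 ?addr0 // => j _.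
  by rewrite /bump /= r0l.
Qed.

Lemma P_eqt n al be u v :
  eqt n (Yp n al u * Yp n be v)
    (\sum_(j < n.+1) 'X^j * Yp n (op al be) (pm ((Yp n al u * Yp n be v)`_j))).
Proof.
move=> i hi; rewrite (coef_sumXn (fun j => Yp n (op al be) (pm ((Yp n al u * Yp n be v)`_j)))) //; apply: RR_eq.
- rewrite pk_sum big1.
  + have := @pk_mul_l (Yp n al u) (Yp n be v) (pk_Yp n al u) i. Timeout 10 exact.
  + move=> j _; exact: pk_Yp.
- rewrite pa_sum (eq_bigr (fun j : 'I_i.+1 => Tt (i - j) (op al be) (pm ((Yp n al u * Yp n be v)`_j)))); last first.
    by move=> j _; rewrite pa_Yp // (leq_trans (leq_subr _ _) hi).
  rewrite (reindex_inj rev_ord_inj) /=.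
  rewrite (eq_bigr (fun j : 'I_i.+1 => Tt j (op al be) (stuff al be u v (i - j)))); last first.
    move=> j _; rewrite subSS subKn; last by rewrite -ltnS.
    by rewrite w_eq // (leq_trans (leq_subr _ _) hi).
  case: HTt => _ [_ hdef]; rewrite -hdef coefM pa_sum; apply: eq_bigr => j _.
  have hj : (j <= n)%N by apply: leq_trans hi; rewrite -ltnS.
  rewrite paMr !pk_Yp !scale0r !add0r pa_Yp // pa_Yp //.
  exact: (leq_trans (leq_subr _ _) hi).
- rewrite pm_sum big_ord_recr /= subnn pm_Yp //= big1 ?add0r //.
  move=> j _; rewrite pm_Yp; last exact: (leq_trans (leq_subr _ _) hi).
  by rewrite subn_eq0 leqNgt ltn_ord.
Qed.

Definition IHg n c := forall i, (i < n)%N -> forall al u, Gam al ((Z i c al u)`_i) = 0.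
Definition Ef n c := fun al u => Gam al ((Z n c al u)`_n).

Lemma Gam_Z0 N c al u : Gam al ((Z N c al u)`_0) = 0.
Proof. by rewrite Z0 /Gam paD pmD pa_ia pa_im pm_ia pm_im addr0 add0r subrr. Qed.

Lemma cocycle n c : (0 < n)%N -> IHg n c -> Z1 op mulA l r H T (Ef n c).
Proof.
move=> hn IH; split.
  by move=> al s u v; rewrite /Ef Z_lin coefD coefCM GamD Gam_sc.
move=> al be u v.
have IHt : forall N i al u, (i < n)%N -> (i <= N)%N -> Gam al ((Z N c al u)`_i) = 0.
  by move=> N i al' u' h1 h2; rewrite Z_trunc // IH.
have hb : (Phi n c (Yp n al u * Yp n be v))`_n = (Z n c al u * Z n c be v)`_n.
  have -> : Z n c al u * Z n c be v =
      (G n c * Yp n al u) * (D n c * G n c) * (Yp n be v * D n c) by rewrite /Z /Phi !mulrA.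
  have := eqt_mulr (Yp n be v * D n c) (eqt_mull (G n c * Yp n al u) (proj2 (GD n c))).
  move=> /(_ n (leqnn n)) ->.
  by rewrite mulr1 /Phi !mulrA.
have hcd : Gam (op al be) ((Phi n c (Yp n al u * Yp n be v))`_n) =
    Ef n c (op al be) (pm ((Yp n al u * Yp n be v)`_0)).
  rewrite /Phi (eqt_mulr _ (eqt_mull _ (P_eqt al be u v))) // -/(Phi n c _) Phi_sum.
  rewrite (eq_bigr (fun j : 'I_n.+1 => 'X^j * Phi n c (Yp n (op al be) (pm ((Yp n al u * Yp n be v)`_j))))); last first.
    by move=> j _; rewrite Phi_X.
  rewrite (coef_sumXn (fun j => Phi n c (Yp n (op al be) (pm ((Yp n al u * Yp n be v)`_j))))) //.
  rewrite Gam_sum big_ord_recl /= subn0 big1 ?addr0 //.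
  move=> j _; rewrite /bump /= add1n -/(Z n c _ _) IHt //.
    by rewrite ltn_subrL hn.
  exact: leq_subr.
have he : Gam (op al be) ((Z n c al u * Z n c be v)`_n) =
   mulA (T al u) (Ef n c be v) - T (op al be) (r u (Ef n c be v) + H (T al u) (Ef n c be v))
   + (mulA (Ef n c al u) (T be v) - T (op al be) (l (Ef n c al u) v + H (Ef n c al u) (T be v))).
  have [m em] : exists m, n = m.+1 by exists n.-1; rewrite prednK.
  subst n.
  have paZ0 : forall al' u', pa ((Z m.+1 c al' u')`_0) = T al' u'.
    by move=> al' u'; rewrite Z0 paD pa_ia pa_im addr0.
  have pmZ0 : forall al' u', pm ((Z m.+1 c al' u')`_0) = u'.
    by move=> al' u'; rewrite Z0 pmD pm_ia pm_im add0r.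
  rewrite coefM Gam_sum big_ord_recl big_ord_recr /=.
  rewrite big1 ?add0r; last first.
    move=> i _; have hbi : bump 0 i = i.+1 by rewrite /bump leq0n add1n.
    have i1 : (i.+1 < m.+1)%N by rewrite ltnS.
    have i2 : (m.+1 - i.+1 < m.+1)%N by rewrite ltn_subrL.
    rewrite hbi Gam_mul ?pk_Z // (IHt _ _ _ _ i1 (ltnW i1)) (IHt _ _ _ _ i2 (leq_subr _ _)).
    by linexp; do 3 rewrite ?addr0 ?subr0 ?T0.
  have hbm : bump 0 m = m.+1 by rewrite /bump leq0n add1n.
  rewrite subn0 hbm subnn Gam_mul ?pk_Z // Gam_mul ?pk_Z //.
  rewrite !Gam_Z0 paZ0 pmZ0 paZ0 pmZ0 -/(Ef m.+1 c be v) -/(Ef m.+1 c al u).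
  linexp; texp; acsolve.
have key : Ef n c (op al be) (l (T al u) v + r u (T be v) + H (T al u) (T be v)) =
   mulA (T al u) (Ef n c be v) - T (op al be) (r u (Ef n c be v) + H (T al u) (Ef n c be v))
   + (mulA (Ef n c al u) (T be v) - T (op al be) (l (Ef n c al u) v + H (Ef n c al u) (T be v))).
  by rewrite -he -hb hcd w_eq // /stuff big_ord1 /= !Tt0.
rewrite key; texp; acsolve.
Qed.

Hypothesis H1z : H1_vanishes op mulA l r H T.

Definition pickA (f : Om -> M -> A) : A :=
  epsilon (inhabits (0 : A)) (fun a => forall al u, f al u = delta0 mulA l r H T a al u).

Fixpoint F (n : nat) : nat -> A :=
  match n with
  | 0 => fun _ => 0
  | n'.+1 => fun i => if i == n'.+1 then pickA (Ef n'.+1 (F n')) else F n' i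
  end.

Lemma F_hi n i : (n < i)%N -> F n i = 0.
Proof.
elim: n => [//|n IH] hi /=.
by rewrite (gtn_eqF hi) IH // ltnW.
Qed.

Lemma F_stab m i : (i <= m)%N -> F m i = F i i.
Proof.
elim: m => [|m IH] hi; first by move: hi; rewrite leqn0 => /eqP ->.
rewrite /=; case: eqP => [-> | ne]; first by rewrite /= eqxx.
apply: IH; move: hi; rewrite leq_eqVlt => /orP [/eqP e|//]; by case: ne.
Qed.

Lemma Z_ext N c c' al u : (forall i, (0 < i <= N)%N -> c i = c' i) -> Z N c al u = Z N c' al u.
Proof. by move=> e; rewrite /Z /Phi (G_ext e) (D_ext e). Qed.

Lemma Gam_update N c c' a al u : (0 < N)%N -> c' N = c N + a ->
  (forall i, (i < N)%N -> c' i = c i) ->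
  Gam al ((Z N c' al u)`_N) = Ef N c al u - delta0 mulA l r H T a al u.
Proof.
move=> hN e1 e2; rewrite /Z (@Phi_update N c c' a _ hN e1 e2) /Ef /Z Yp0 /delta0.
rewrite /Gam; simp; texp; acsolve.
Qed.

Lemma graphF n al u : Gam al ((Z n (F n) al u)`_n) = 0.
Proof.
elim/ltn_ind: n al u => n IHn al u.
case: n IHn => [|N] IHn; first exact: Gam_Z0.
set c := F N.
have hIH : IHg N.+1 c.
  move=> i hi al' u'; rewrite (@Z_ext i c (F i)); first exact: IHn.
  move=> j /andP [_ hj]; rewrite /c F_stab ?(leq_trans hj) // -?ltnS //.
  by rewrite (F_stab hj).
have hz := cocycle (ltn0Sn N) hIH.
have [a ha] := H1z hz.
have hp : forall al u, Ef N.+1 c al u = delta0 mulA l r H T (pickA (Ef N.+1 c)) al u.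
  exact: (epsilon_spec (inhabits (0 : A))
    (fun a => forall al u, Ef N.+1 c al u = delta0 mulA l r H T a al u) (ex_intro _ a ha)).
rewrite (@Gam_update N.+1 c (F N.+1) (pickA (Ef N.+1 c))) //.
- by rewrite hp subrr.
- by rewrite /= eqxx /c F_hi // add0r.
- by move=> i hi; rewrite /= (ltn_eqF hi).
Qed.

Definition cf i := F i i.
Lemma Z_cf n al u : Z n cf al u = Z n (F n) al u.
Proof. by apply: Z_ext => i /andP [_ hi]; rewrite /cf F_stab. Qed.
Lemma graph_cf n al u : pa ((Z n cf al u)`_n) = T al (pm ((Z n cf al u)`_n)).
Proof. by apply/eqP; rewrite -subr_eq0; apply/eqP; rewrite Z_cf; apply: graphF. Qed.

Definition phiF m (x : A) := pa ((Phi m cf (ia x)%:P)`_m).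
Definition psiF m al u := pm ((Z m cf al u)`_m).

Lemma coef1Phi N c (p : {poly RR}) :
  (Phi N c p)`_1 = (G N c)`_1 * p`_0 + p`_1 + p`_0 * (D N c)`_1.
Proof.
rewrite /Phi coefM big_ord_recr big_ord1 /= subn0 subnn coef0M G0 mul1r D0 mulr1.
rewrite coefM big_ord_recr big_ord1 /= subn0 subnn G0 mul1r; acsolve.
Qed.

Lemma phiF0 x : phiF 0 x = x.
Proof. by rewrite /phiF Phi0 coefC. Qed.
Lemma phiF1 x : phiF 1 x = mulA (cf 1) x - mulA x (cf 1).
Proof.
rewrite /phiF coef1Phi G1 // D1 // !coefC /= addr0.
by simp; acsolve.
Qed.
Lemma psiF0 al u : psiF 0 al u = u.
Proof. by rewrite /psiF Z0 pmD pm_ia pm_im add0r. Qed.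
Lemma psiF1 al u : psiF 1 al u =
  l (cf 1) u - r u (cf 1) + H (cf 1) (T al u) - H (T al u) (cf 1).
Proof.
rewrite /psiF /Z coef1Phi G1 // D1 // Yp0 coefYp //=.
by simp; acsolve.
Qed.

Lemma phi_coef_eq i x : phi_coef mulA (cf 1) phiF i x = phiF i x.
Proof. by case: i => [|[|i]] //=; rewrite ?phiF0 ?phiF1. Qed.
Lemma psi_coef_eq i al u : psi_coef l r H T (cf 1) psiF i al u = psiF i al u.
Proof. by case: i => [|[|i]] //=; rewrite ?psiF0 ?psiF1. Qed.

Lemma pure_mul_l (p q : {poly RR}) : (forall i, pk (p`_i) = 0 /\ pa (p`_i) = 0) ->
  forall i, pk ((p * q)`_i) = 0 /\ pa ((p * q)`_i) = 0.
Proof.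
move=> h i; rewrite coefM pk_sum pa_sum; split; rewrite big1 // => j _;
  case: (h j) => h1 h2; rewrite ?pkMr ?paMr ?h1 ?h2; by simp.
Qed.
Lemma pure_mul_r (p q : {poly RR}) : (forall i, pk (q`_i) = 0 /\ pa (q`_i) = 0) ->
  forall i, pk ((p * q)`_i) = 0 /\ pa ((p * q)`_i) = 0.
Proof.
move=> h i; rewrite coefM pk_sum pa_sum; split; rewrite big1 // => j _;
  case: (h (i - j)%N) => h1 h2; rewrite ?pkMr ?paMr ?h1 ?h2; by simp.
Qed.

Lemma Yp_decomp n al u : eqt n (Yp n al u)
  ((im u)%:P + \sum_(j < n.+1) 'X^j * (ia (Tt j al u))%:P).
Proof.
move=> i hi; rewrite coefYp // coefD coefC.
rewrite (coef_sumXn (fun j => (ia (Tt j al u))%:P)) //; congr (_ + _).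
rewrite big_ord_recr /= subnn coefC /= big1 ?add0r // => j _.
by rewrite coefC subn_eq0 leqNgt ltn_ord.
Qed.

Lemma pa_Z n al u : pa ((Z n cf al u)`_n) = \sum_(i < n.+1) phiF i (Tt (n - i) al u).
Proof.
rewrite /Z /Phi (eqt_mulr _ (eqt_mull _ (@Yp_decomp n al u))) //.
rewrite -/(Phi n cf _) PhiD Phi_sum coefD paD.
have h : forall i, pk (((im u)%:P : {poly RR})`_i) = 0 /\ pa (((im u)%:P : {poly RR})`_i) = 0.
  by move=> i; rewrite coefC; case: ifP.
have h2 := pure_mul_l (D n cf) (pure_mul_r (G n cf) h) n.
have -> : pa ((Phi n cf (im u)%:P)`_n) = 0 by exact: (proj2 h2).
rewrite add0r.
rewrite (eq_bigr (fun j : 'I_n.+1 => 'X^j * Phi n cf (ia (Tt j al u))%:P)); last first.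
  by move=> j _; rewrite Phi_X.
rewrite (coef_sumXn (fun j => Phi n cf (ia (Tt j al u))%:P)) // pa_sum.
rewrite (reindex_inj rev_ord_inj) /=; apply: eq_bigr => j _.
have hjn : (j <= n)%N by rewrite -ltnS.
rewrite subSS subKn // /phiF.
by rewrite (@Phi_trunc j n cf _ _ hjn (@eqt_refl j ((ia (Tt (n - j) al u))%:P)) j (leqnn j)).
Qed.

Lemma main_equiv : equiv_deformations mulA l r H T Tt (const_deformation 0 T).
Proof.
exists (cf 1), phiF, psiF; split; [|split].
- move=> i _ s x y; rewrite /phiF ia_lin polyCD polyCM PhiD Phi_sc coefD coefCM paD pa_scM //.
- move=> i al _ s x y; rewrite /psiF Z_lin coefD coefCM pmD pm_scM //.
- move=> n al u.
  rewrite (eq_bigr (fun i : 'I_n.+1 => phiF i (Tt (n - i) al u))); last first.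
    by move=> i _; rewrite phi_coef_eq.
  have -> : \sum_(i < n.+1) const_deformation 0 T i al (psi_coef l r H T (cf 1) psiF (n - i) al u)
      = T al (psiF n al u).
    rewrite big_ord_recl big1 ?addr0 //= subn0 psi_coef_eq //.
  by rewrite -pa_Z graph_cf.
Qed.

End Main.

Theorem theorem4p8 (k : fieldType) (Hchar : [pchar k] =i pred0)
  (Om : Type) (op : Om -> Om -> Om) (e : Om) (HOm : is_monoid op e)
  (A : lmodType k) (mulA : A -> A -> A) (HA : assoc_alg mulA)
  (M : lmodType k) (l : A -> M -> M) (r : M -> A -> M) (HM : bimodule mulA l r)
  (H : A -> A -> M) (HH : hoch_2cocycle mulA l r H)
  (T : Om -> M -> A) (HT : twisted_Oop_family op mulA l r H T)
  (H1zero : H1_vanishes op mulA l r H T) :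
  forall Tt : nat -> Om -> M -> A,
    formal_deformation op mulA l r H T Tt ->
    equiv_deformations mulA l r H T Tt (const_deformation 0 T).
Proof.
move=> Tt HTt.
exact: (main_equiv HA HM HH HT HTt H1zero).
Qed.
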